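(* Consider a steady travelling-wave solution of the one-dimensional solid-propellant combustion model described in the context, with $c<0$ and $\dot m=-\rho_s c>0$. Then $x\mapsto \omega(x)$ is integrable on $(0,\infty)$ and $$\int_0^{+\infty}\omega(x)\,dx=-\frac{\dot m}{M\nu}.$$
   Context: Travelling-wave frame: solid in $x<0$, gas in $x>0$, interface at $x=0$; $c<0$ is the constant regression velocity, $\rho_s>0$ the solid density and $\dot m:=-\rho_s c$. The gas contains two species with common molar mass $M>0$: a reactant with mass fraction $Y$ and a product with mass fraction $1-Y$, linked by one irreversible reaction with global stoichiometric coefficient $\nu<0$ for the reactant. On $x>0$: $\rho>0$, $u$ are $C^1$, $Y$ is $C^2$, the species diffusion coefficient $D_g>0$ is a continuous function, and the reaction rate $\omega(x)=\omega(T(x),Y(x))\ge 0$ is continuous. The equations are: $-c\rho'+(\rho u)'=0$ and $\rho(u-c)Y'-(\rho D_g Y')'=\nu M\omega$ for $x>0$. Interface conditions: $\rho(0^+)(u(0^+)-c)=-\rho_s c$ (no mass accumulation); the pyrolysis injects pure reactant, i.e. the injection mass fraction is $Y(0^-)=1$; species balance $\dot m\,Y(0^-)=\dot m\,Y(0^+)-\rho(0^+)D_g(0^+)Y'(0^+)$. Far field: the reactant is completely consumed, $Y(x)\to0$, and the diffusive flux vanishes, $\rho D_g Y'(x)\to0$, as $x\to+\infty$. *)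

(* Defs.v *)
From Stdlib Require Import Reals.
From Coquelicot Require Import Coquelicot.
Open Scope R_scope.

Definition C1_pos (f : R -> R) : Prop :=
  forall x, 0 < x -> ex_derive f x /\ continuous (Derive f) x.

Definition C2_pos (f : R -> R) : Prop :=
  forall x, 0 < x ->
    ex_derive f x /\ ex_derive (Derive f) x /\
    continuous (Derive (Derive f)) x.

Definition C0_pos (f : R -> R) : Prop :=
  forall x, 0 < x -> continuous f x.

(* Main.v *)
Require Import Defs.
From Stdlib Require Import Reals Lra.
From Coquelicot Require Import Coquelicot.
Open Scope R_scope.

Lemma lim_mult {T} (F : (T -> Prop) -> Prop) {FF : Filter F} (f g : T -> R) a b :
  filterlim f F (locally a) -> filterlim g F (locally b) ->
  filterlim (fun x => f x * g x) F (locally (a * b)).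
Proof.
  intros Hf Hg. apply (filterlim_comp_2 f g Rmult Hf Hg).
  exact (@filterlim_mult R_AbsRing a b).
Qed.

Lemma lim_minus {T} (F : (T -> Prop) -> Prop) {FF : Filter F} (f g : T -> R) a b :
  filterlim f F (locally a) -> filterlim g F (locally b) ->
  filterlim (fun x => f x - g x) F (locally (a - b)).
Proof.
  intros Hf Hg.
  assert (Hg' : filterlim (fun x => opp (g x)) F (locally (opp b))).
  { apply (filterlim_comp _ _ _ g opp F (locally b) (locally (opp b)) Hg).
    exact (@filterlim_opp R_AbsRing R_NormedModule b). }
  apply (filterlim_comp_2 f (fun x => opp (g x)) Rplus Hf Hg').
  exact (@filterlim_plus _ R_NormedModule a (opp b)).
Qed.

Lemma lim_const {T} (F : (T -> Prop) -> Prop) {FF : Filter F} (a : R) :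
  filterlim (fun _ : T => a) F (locally a).
Proof. apply filterlim_const. Qed.

Lemma lim_fst {T U} (F : (T -> Prop) -> Prop) (G : (U -> Prop) -> Prop) {FG : Filter G} :
  filterlim (@fst T U) (filter_prod F G) F.
Proof.
  intros P HP. exists P (fun _ => True); auto. apply filter_true.
Qed.

Lemma lim_snd {T U} (F : (T -> Prop) -> Prop) (G : (U -> Prop) -> Prop) {FF : Filter F} :
  filterlim (@snd T U) (filter_prod F G) G.
Proof.
  intros P HP. exists (fun _ => True) P; auto. apply filter_true.
Qed.

Theorem proposition2
  (c rho_s M nu : R)
  (rho u Y Dg omega : R -> R)
  (rho0 u0 Y0 D0 Yp0 : R)
  (* constants *)
  (Hc : c < 0) (Hrhos : 0 < rho_s) (HM : 0 < M) (Hnu : nu < 0)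
  (* regularity and sign conditions on x > 0 *)
  (Hrho_pos : forall x, 0 < x -> 0 < rho x)
  (Hrho_C1 : C1_pos rho) (Hu_C1 : C1_pos u) (HY_C2 : C2_pos Y)
  (HDg_pos : forall x, 0 < x -> 0 < Dg x) (HDg_C0 : C0_pos Dg)
  (Homega_C0 : C0_pos omega) (Homega_nonneg : forall x, 0 < x -> 0 <= omega x)
  (* mass conservation: -c rho' + (rho u)' = 0 *)
  (Hmass : forall x, 0 < x ->
     - c * Derive rho x + Derive (fun y => rho y * u y) x = 0)
  (* species equation: rho (u - c) Y' - (rho Dg Y')' = nu M omega *)
  (Hflux_der : forall x, 0 < x ->
     ex_derive (fun y => rho y * Dg y * Derive Y y) x)
  (Hspecies : forall x, 0 < x ->
     rho x * (u x - c) * Derive Y x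
     - Derive (fun y => rho y * Dg y * Derive Y y) x = nu * M * omega x)
  (* interface traces at 0^+ *)
  (Hrho0 : filterlim rho (at_right 0) (locally rho0))
  (Hu0 : filterlim u (at_right 0) (locally u0))
  (HY0 : filterlim Y (at_right 0) (locally Y0))
  (HD0 : filterlim Dg (at_right 0) (locally D0))
  (HYp0 : filterlim (Derive Y) (at_right 0) (locally Yp0))
  (* interface conditions, with mdot = - rho_s c and Y(0^-) = 1 *)
  (Hnoacc : rho0 * (u0 - c) = - rho_s * c)
  (Hbalance : (- rho_s * c) * 1 = (- rho_s * c) * Y0 - rho0 * D0 * Yp0)
  (* far field *)
  (HYinf : filterlim Y (Rbar_locally p_infty) (locally 0))
  (Hfluxinf : filterlim (fun x => rho x * Dg x * Derive Y x)
                (Rbar_locally p_infty) (locally 0)) :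
  is_RInt_gen omega (at_right 0) (Rbar_locally p_infty)
    (- (- rho_s * c) / (M * nu)).
Proof.
  set (m := (- rho_s * c)).
  set (F := fun y => rho y * Dg y * Derive Y y).
  set (K := fun y => rho y * u y - c * rho y).
  assert (HK' : forall x, 0 < x -> is_derive K x 0).
  { intros x Hx.
    destruct (Hrho_C1 x Hx) as [Dr _]. destruct (Hu_C1 x Hx) as [Du _].
    assert (Hru : ex_derive (fun y => rho y * u y) x) by (apply ex_derive_mult; auto).
    replace 0 with (Derive (fun y => rho y * u y) x - c * Derive rho x)
      by (specialize (Hmass x Hx); lra).
    unfold K. apply (is_derive_minus (fun y => rho y * u y) (fun y => c * rho y)).
    - apply Derive_correct; auto.
    - apply is_derive_scal. apply Derive_correct; auto. }
  assert (HKconst : forall a b, 0 < a -> 0 < b -> K a = K b).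
  { intros a b Ha Hb.
    destruct (Rtotal_order a b) as [Hab|[Hab|Hab]].
    - destruct (MVT_cor2 K (fun _ => 0) a b Hab) as [z [Hz _]].
      + intros z Hz. apply is_derive_Reals. apply HK'. lra.
      + lra.
    - subst; reflexivity.
    - destruct (MVT_cor2 K (fun _ => 0) b a Hab) as [z [Hz _]].
      + intros z Hz. apply is_derive_Reals. apply HK'. lra.
      + lra. }
  assert (HKm : forall x, 0 < x -> rho x * (u x - c) = m).
  { intros x Hx.
    assert (L1 : filterlim K (at_right 0) (locally (rho0 * u0 - c * rho0))).
    { exact (lim_minus _ _ _ _ _ (lim_mult _ _ _ _ _ Hrho0 Hu0)
               (lim_mult _ _ _ _ _ (lim_const _ c) Hrho0)). }
    assert (L2 : filterlim K (at_right 0) (locally (K x))).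
    { apply (filterlim_ext_loc (fun _ => K x)).
      - exists (mkposreal 1 Rlt_0_1). intros y _ Hy. apply HKconst; auto.
      - exact (lim_const _ (K x)). }
    pose proof (filterlim_locally_unique _ _ _ L1 L2) as E.
    unfold K in E. unfold m. rewrite <- Hnoacc. lra. }
  set (H := fun y => (m * Y y - F y) / (nu * M)).
  assert (HH : forall x, 0 < x -> is_derive H x (omega x)).
  { intros x Hx.
    destruct (HY_C2 x Hx) as [DY _].
    replace (omega x) with ((m * Derive Y x - Derive F x) / (nu * M)).
    2:{ rewrite <- (HKm x Hx). unfold F. rewrite (Hspecies x Hx). field. lra. }
    unfold H. unfold Rdiv. rewrite (Rmult_comm _ (/ (nu * M))).
    apply (is_derive_ext (fun y => / (nu * M) * (m * Y y - F y))).
    { intros t. apply Rmult_comm. }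
    apply (is_derive_scal (fun y => m * Y y - F y)).
    apply (is_derive_minus (fun y => m * Y y) F).
    - apply is_derive_scal. apply Derive_correct; auto.
    - apply Derive_correct. apply Hflux_der; auto. }
  assert (HI : filter_prod (at_right 0) (Rbar_locally p_infty)
     (fun ab => is_RInt omega (fst ab) (snd ab) (H (snd ab) - H (fst ab)))).
  { exists (fun a => 0 < a) (fun b => 0 < b).
    + exists (mkposreal 1 Rlt_0_1). intros y _ Hy. exact Hy.
    + exists 0. intros y Hy. exact Hy.
    + intros a b Ha Hb. simpl.
      apply (is_RInt_derive H omega a b).
      * intros x Hx. apply HH.
        assert (0 < Rmin a b) by (apply Rmin_glb_lt; auto). lra.
      * intros x Hx. apply Homega_C0.
        assert (0 < Rmin a b) by (apply Rmin_glb_lt; auto). lra. }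
  assert (HL : filterlim (fun ab => H (snd ab) - H (fst ab))
     (filter_prod (at_right 0) (Rbar_locally p_infty))
     (locally (- (- rho_s * c) / (M * nu)))).
  { assert (Ha : filterlim H (at_right 0) (locally ((m * Y0 - rho0 * D0 * Yp0) * / (nu * M)))).
    { exact (lim_mult _ _ _ _ _ (lim_minus _ _ _ _ _ (lim_mult _ _ _ _ _ (lim_const _ m) HY0)
          (lim_mult _ _ _ _ _ (lim_mult _ _ _ _ _ Hrho0 HD0) HYp0)) (lim_const _ _)). }
    assert (Hb : filterlim H (Rbar_locally p_infty) (locally ((m * 0 - 0) * / (nu * M)))).
    { exact (lim_mult _ _ _ _ _ (lim_minus _ _ _ _ _ (lim_mult _ _ _ _ _ (lim_const _ m) HYinf)
          Hfluxinf) (lim_const _ _)). }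
    replace (- (- rho_s * c) / (M * nu)) with ((m * 0 - 0) * / (nu * M) - (m * Y0 - rho0 * D0 * Yp0) * / (nu * M)).
    2:{ unfold m. rewrite <- Hbalance. field. lra. }
    refine (lim_minus _ (fun ab => H (snd ab)) (fun ab => H (fst ab)) _ _ _ _).
    - exact (filterlim_comp _ _ _ snd H _ _ _ (lim_snd _ _) Hb).
    - exact (filterlim_comp _ _ _ fst H _ _ _ (lim_fst _ _) Ha). }
  intros P HP.
  apply HL in HP. unfold filtermapi, filtermap in *.
  apply (filter_imp (fun ab => is_RInt omega (fst ab) (snd ab) (H (snd ab) - H (fst ab))
     /\ P (H (snd ab) - H (fst ab)))).
  - intros ab [H1 H2]. exists (H (snd ab) - H (fst ab)). split; assumption.
  - apply filter_and; assumption.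
Qed.
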